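(* For any $\mathbf{p},\mathbf{q}\in\mathbb{R}_{\ge0}^{G_\Delta}$ with $\|\mathbf{p}\|_1=\|\mathbf{q}\|_1$ and any $\sigma>0$, $\mathrm{EMD}(\tilde H^\sigma_{\mathbf{p}},\tilde H^\sigma_{\mathbf{q}})\le\mathrm{EMD}(\mathbf{p},\mathbf{q})$.
   Context: $G_\Delta=\{(i/\Delta,j/\Delta):i,j\in\{0,\dots,\Delta-1\}\}$ and $\tilde G_\Delta=\{(i/\Delta,j/\Delta):i,j\in\mathbb{Z}\}$. For $\mathbf{p}\in\mathbb{R}_{\ge0}^{G_\Delta}$ the infinite heatmap is $\tilde H^\sigma_{\mathbf{p}}(a)=\sum_{a'\in G_\Delta}\frac1Z e^{-\|a-a'\|_2^2/(2\sigma^2)}\mathbf{p}(a')$ for $a\in\tilde G_\Delta$, where $Z=\sum_{d\in\tilde G_\Delta}e^{-\|d\|_2^2/(2\sigma^2)}$. For nonnegative $\mu,\nu$ on a set of points in $\mathbb{R}^2$ with equal total mass, $\mathrm{EMD}(\mu,\nu)=\inf_\gamma\sum_{x,y}\gamma(x,y)\|x-y\|_1$ over nonnegative $\gamma$ with marginals $\mu$ and $\nu$. *)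

(* Defs.v *)
From HB Require Import structures.
From mathcomp Require Import all_boot all_order all_algebra.
From mathcomp Require Import all_classical all_reals all_analysis.
Unset Printing Implicit Defensive.
Import Order.TTheory GRing.Theory Num.Theory.
Local Open Scope classical_set_scope.
Local Open Scope ring_scope.

Section Defs.
Variable R : realType.

Definition l1dist (x y : R * R) : R := `|x.1 - y.1| + `|x.2 - y.2|.
Definition sqdist (x y : R * R) : R := (x.1 - y.1) ^+ 2 + (x.2 - y.2) ^+ 2.

Definition couplings (T : choiceType) (mu nu : T -> \bar R) : set (T * T -> \bar R) :=
  [set g | (forall z, (0 <= g z)%E) /\
           (forall x, \esum_(y in [set: T]) g (x, y) = mu x) /\
           (forall y, \esum_(x in [set: T]) g (x, y) = nu y)].

Definition EMD (T : choiceType) (pos : T -> R * R) (mu nu : T -> \bar R) : \bar R :=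
  ereal_inf [set \esum_(z in [set: T * T]) (g z * (l1dist (pos z.1) (pos z.2))%:E)%E
            | g in couplings T mu nu].

(* The finite grid G_Delta, indexed by 'I_Delta * 'I_Delta, and the
   infinite grid ~G_Delta, indexed by int * int. *)
Definition Gpos (Delta : nat) (a : 'I_Delta * 'I_Delta) : R * R :=
  ((a.1 : nat)%:R / Delta%:R, (a.2 : nat)%:R / Delta%:R).
Definition Zpos (Delta : nat) (a : int * int) : R * R :=
  (a.1%:~R / Delta%:R, a.2%:~R / Delta%:R).

Definition Znorm (Delta : nat) (sigma : R) : R :=
  fine (\esum_(d in [set: int * int])
          (expR (- sqdist (Zpos Delta d) (0, 0) / (2 * sigma ^+ 2)))%:E).

Definition heatmap (Delta : nat) (sigma : R) (p : 'I_Delta * 'I_Delta -> R)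
    (a : int * int) : R :=
  \sum_(a' : 'I_Delta * 'I_Delta)
     (Znorm Delta sigma)^-1 *
     expR (- sqdist (Zpos Delta a) (Gpos Delta a') / (2 * sigma ^+ 2)) * p a'.
End Defs.
Arguments l1dist {R}.
Arguments sqdist {R}.
Arguments couplings {R T}.
Arguments EMD {R T}.
Arguments Gpos {R}.
Arguments Zpos {R}.
Arguments Znorm {R}.
Arguments heatmap {R Delta}.

(* Main.v *)
Require Import Defs.
From HB Require Import structures.
From mathcomp Require Import all_boot all_order all_algebra.
From mathcomp Require Import all_classical all_reals all_analysis.
From mathcomp Require Import ring lra.
Import Order.TTheory GRing.Theory Num.Theory.
Local Open Scope classical_set_scope.
Local Open Scope ring_scope.

Definition ee (D : nat) (x : 'I_D * 'I_D) : int * int := ((x.1 : nat)%:Z, (x.2 : nat)%:Z).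
Arguments ee {D}.
Definition sh (a d : int * int) : int * int := (a.1 + d.1, a.2 + d.2).
Definition dxy (D : nat) (x y : 'I_D * 'I_D) : int * int :=
  ((ee y).1 - (ee x).1, (ee y).2 - (ee x).2).
Arguments dxy {D}.
Definition ng (d : int * int) : int * int := (- d.1, - d.2).

Lemma GposE (R : realType) D x : Gpos D x = Zpos (R:=R) D (ee x).
Proof. by []. Qed.

Lemma F1 (R : realType) D a (x y : 'I_D * 'I_D) :
  l1dist (Zpos (R:=R) D a) (Zpos D (sh a (dxy x y))) = l1dist (Gpos D x) (Gpos D y).
Proof.
rewrite !GposE /l1dist /Zpos /sh /dxy /ee /=.
rewrite !intrD ?intrB ?intrN.
congr (_ + _); congr (`| _ |); ring.
Qed.

Lemma F2 (R : realType) D b (x y : 'I_D * 'I_D) :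
  sqdist (Zpos (R:=R) D (sh b (ng (dxy x y)))) (Gpos D x) = sqdist (Zpos D b) (Gpos D y).
Proof.
rewrite !GposE /sqdist /Zpos /sh /ng /dxy /ee /=.
by rewrite !intrD ?intrN ?intrB ?intrN; ring.
Qed.

Lemma F3 (R : realType) D d (x : 'I_D * 'I_D) :
  sqdist (Zpos (R:=R) D (sh d (ee x))) (Gpos D x) = sqdist (Zpos D d) (0, 0).
Proof.
rewrite !GposE /sqdist /Zpos /sh /ee /=.
by rewrite !intrD; ring.
Qed.

Lemma Fc (a b d : int * int) : (b == sh a d) = (a == sh b (ng d)).
Proof.
case: a b d => [a1 a2] [b1 b2] [d1 d2]; rewrite /sh /ng /= !xpair_eqE.
congr andb; apply/eqP/eqP => ->; ring.
Qed.
Lemma esum_pick (R : realType) (T : choiceType) (c : T) (F : T -> \bar R) :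
  (0 <= F c)%E -> \esum_(b in [set: T]) (if b == c then F b else 0%E) = F c.
Proof.
move=> F0; rewrite -(esum_set1 F0) [RHS]esum_mkcond; apply: eq_esum => b _.
by rewrite in_set1.
Qed.

Lemma esum_fin (R : realType) (T : finType) (f : T -> \bar R) :
  (forall i, 0 <= f i)%E -> \esum_(i in [set: T]) f i = (\sum_(i : T) f i)%E.
Proof.
move=> f0.
transitivity (\esum_(j in [set: T]) \sum_(i : T) (if j == i then f j else 0%E))%E.
  apply: eq_esum => j _; rewrite -big_mkcond /=.
  by rewrite (big_pred1 j) // => i; rewrite eq_sym.
rewrite esum_sum; last by move=> i j _ _; case: ifP.
by apply: eq_bigr => i _; rewrite esum_pick.
Qed.

Lemma esumZ_le (R : realType) (T : choiceType) (r : R) (f : T -> \bar R) :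
  0 <= r -> (forall i, 0 <= f i)%E ->
  (\esum_(i in [set: T]) (r%:E * f i) <= r%:E * \esum_(i in [set: T]) f i)%E.
Proof.
move=> r0 f0; apply: ge_ereal_sup => _ [X [finX _] <-] /=.
rewrite fsbig_finite //= -ge0_sume_distrr; last by move=> i _; exact: f0.
apply: lee_wpmul2l; first by rewrite lee_fin.
rewrite -fsbig_finite //.
by apply: ereal_sup_ubound; exists X.
Qed.

Lemma esum_pickc (R : realType) (T : choiceType) (c : T) (v : \bar R) :
  (0 <= v)%E -> \esum_(b in [set: T]) (if b == c then v else 0%E) = v.
Proof. by move=> v0; rewrite (@esum_pick R T c (fun _ => v)). Qed.

Definition Kf (R : realType) (D : nat) (sigma : R) (a : int * int) (x : 'I_D * 'I_D) : R :=
  (Znorm D sigma)^-1 * expR (- sqdist (Zpos D a) (Gpos D x) / (2 * sigma ^+ 2)).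
Arguments Kf {R D}.

Lemma Znorm_ge0 (R : realType) (D : nat) (sigma : R) : 0 <= Znorm D sigma.
Proof. by apply: fine_ge0; apply: esum_ge0 => d _; rewrite lee_fin expR_ge0. Qed.

Lemma Kf_ge0 (R : realType) (D : nat) (sigma : R) a (x : 'I_D * 'I_D) : 0 <= Kf sigma a x.
Proof. by rewrite /Kf mulr_ge0 ?invr_ge0 ?Znorm_ge0 ?expR_ge0. Qed.

Lemma Ksum (R : realType) (D : nat) (sigma : R) (x : 'I_D * 'I_D) :
  (\esum_(a in [set: int * int]) (Kf sigma a x)%:E <= 1)%E.
Proof.
rewrite /Kf; under eq_esum do rewrite EFinM.
apply: le_trans; first apply: esumZ_le.
- by rewrite invr_ge0 Znorm_ge0.
- by move=> i; rewrite lee_fin expR_ge0.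
rewrite (reindex_esum [set: int * int] [set: int * int] (fun d => sh d (ee x))); last first.
  rewrite setTT_bijective; exists (fun d => sh d (ng (ee x))) => d;
  by case: d => d1 d2; rewrite /sh /ng /=; congr pair; ring.
under eq_esum do rewrite F3.
rewrite /Znorm.
set S := esum _ _.
have S0 : (0 <= S)%E by apply: esum_ge0 => d _; rewrite lee_fin expR_ge0.
case: S S0 => [r||] //= r0.
  rewrite -EFinM lee_fin; have [->|rn0] := eqVneq r 0; first by rewrite mulr0.
  by rewrite mulVf.
by rewrite invr0 mul0e.
Qed.

Definition gam (R : realType) (D : nat) (sigma : R)
  (g : ('I_D * 'I_D) * ('I_D * 'I_D) -> \bar R) (z : (int * int) * (int * int)) : \bar R :=
  (\sum_(w : ('I_D * 'I_D) * ('I_D * 'I_D))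
     (if z.2 == sh z.1 (dxy w.1 w.2) then g w * (Kf sigma z.1 w.1)%:E else 0))%E.
Arguments gam {R D}.

Lemma gam_ge0 (R : realType) (D : nat) (sigma : R) g z :
  (forall w, 0 <= g w)%E -> (0 <= @gam R D sigma g z)%E.
Proof.
move=> g0; apply: sume_ge0 => w _; case: ifP => // _.
by rewrite mule_ge0 // lee_fin Kf_ge0.
Qed.

Lemma marg1 (R : realType) (D : nat) (sigma : R) (p q : 'I_D * 'I_D -> R) g a :
  g \in couplings (fun a => (p a)%:E) (fun a => (q a)%:E) ->
  \esum_(b in [set: int * int]) gam sigma g (a, b) = (heatmap sigma p a)%:E.
Proof.
rewrite inE => -[g0 [m1 m2]].
rewrite /gam /= esum_sum; last first.
  by move=> i j _ _; case: ifP => // _; rewrite mule_ge0 // lee_fin Kf_ge0.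
under eq_bigr do rewrite esum_pickc ?mule_ge0 ?lee_fin ?Kf_ge0 //.
rewrite /heatmap -sumEFin.
rewrite (eq_bigr (fun w => g (w.1, w.2) * (Kf sigma a w.1)%:E)%E); last by case.
rewrite -(pair_bigA _ (fun x y => g (x, y) * (Kf sigma a x)%:E)%E) /=; apply: eq_bigr => x _.
rewrite -ge0_sume_distrl // -esum_fin // m1 -EFinM mulrC.
by rewrite /Kf.
Qed.

Lemma marg2 (R : realType) (D : nat) (sigma : R) (p q : 'I_D * 'I_D -> R) g b :
  g \in couplings (fun a => (p a)%:E) (fun a => (q a)%:E) ->
  \esum_(a in [set: int * int]) gam sigma g (a, b) = (heatmap sigma q b)%:E.
Proof.
rewrite inE => -[g0 [m1 m2]].
rewrite /gam /= esum_sum; last first.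
  by move=> i j _ _; case: ifP => // _; rewrite mule_ge0 // lee_fin Kf_ge0.
transitivity (\sum_(w : ('I_D * 'I_D) * ('I_D * 'I_D)) g w * (Kf sigma b w.2)%:E)%E.
  apply: eq_bigr => w _.
  transitivity (\esum_(a in [set: int * int])
     (if a == sh b (ng (dxy w.1 w.2)) then g w * (Kf sigma b w.2)%:E else 0))%E.
    apply: eq_esum => a _; rewrite Fc; case: eqP => // ->.
    by rewrite /Kf F2.
  by rewrite esum_pickc // mule_ge0 // lee_fin Kf_ge0.
rewrite /heatmap -sumEFin.
rewrite (eq_bigr (fun w => g (w.1, w.2) * (Kf sigma b w.2)%:E)%E); last by case.
rewrite -(pair_bigA _ (fun x y => g (x, y) * (Kf sigma b y)%:E)%E) /= exchange_big /=; apply: eq_bigr => y _.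
rewrite -ge0_sume_distrl // -esum_fin // m2 -EFinM mulrC.
by rewrite /Kf.
Qed.

Lemma costle (R : realType) (D : nat) (sigma : R) g :
  (forall w, 0 <= g w)%E ->
  (\esum_(z in [set: (int * int) * (int * int)])
      (gam sigma g z * (l1dist (Zpos D z.1) (Zpos D z.2))%:E)
   <= \esum_(z in [set: ('I_D * 'I_D) * ('I_D * 'I_D)])
      (g z * (l1dist (Gpos D z.1) (Gpos D z.2))%:E))%E.
Proof.
move=> g0.
have l0 (u v : R * R) : (0 <= (l1dist u v)%:E)%E.
  by rewrite lee_fin /l1dist addr_ge0.
rewrite esum_fin; last by move=> w; rewrite mule_ge0.
rewrite /gam.
under eq_esum => z _.
  rewrite ge0_sume_distrl; last first.
    by move=> w _; case: ifP => // _; rewrite mule_ge0 // lee_fin Kf_ge0.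
  over.
rewrite esum_sum; last first.
  by move=> z w _ _; case: ifP => _; rewrite ?mul0e // !mule_ge0 // lee_fin Kf_ge0.
apply: lee_sum => w _.
have -> : [set: (int * int) * (int * int)] = [set: int * int] `*`` (fun _ => [set: int * int]).
  by apply/seteqP; split.
rewrite -(esum_esum (a := fun a b =>
   ((if b == sh a (dxy w.1 w.2) then g w * (Kf sigma a w.1)%:E else 0) *
    (l1dist (Zpos D a) (Zpos D b))%:E)%E)); last first.
  by move=> a b _ _; case: ifP => _; rewrite ?mul0e // !mule_ge0 // lee_fin Kf_ge0.
set L := l1dist (Gpos D w.1) (Gpos D w.2).
rewrite (eq_esum (b := fun a => ((g w * L%:E) * (Kf sigma a w.1)%:E)%E)); last first.
  move=> a _ /=.
  transitivity (\esum_(b in [set: int * int])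
     (if b == sh a (dxy w.1 w.2) then (g w * L%:E) * (Kf sigma a w.1)%:E else 0))%E.
    apply: eq_esum => b _; case: eqP => [->|_]; last by rewrite mul0e.
    by rewrite /L F1 -!muleA [X in (_ * X)%E]muleC.
  rewrite esum_pickc //; apply: mule_ge0; [apply: mule_ge0 => //; exact: l0 | by rewrite lee_fin Kf_ge0].
have c0 : (0 <= g w * L%:E)%E by apply: mule_ge0 => //; exact: l0.
move: c0; case: (g w * L%:E)%E => [r||] //= r0.
  apply: le_trans; first by apply: esumZ_le => // i; rewrite lee_fin Kf_ge0.
  by rewrite -[X in (_ <= X)%E]mule1 lee_wpmul2l // Ksum.
by rewrite leey.
Qed.

Theorem lemma7 (R : realType) (Delta : nat) (hDelta : (0 < Delta)%N)
    (p q : 'I_Delta * 'I_Delta -> R)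
    (hp : forall a, 0 <= p a) (hq : forall a, 0 <= q a)
    (hmass : \sum_a p a = \sum_a q a)
    (sigma : R) (hsigma : 0 < sigma) :
  (EMD (@Zpos R Delta)
       (fun a => (heatmap sigma p a)%:E) (fun a => (heatmap sigma q a)%:E)
   <= EMD (@Gpos R Delta) (fun a => (p a)%:E) (fun a => (q a)%:E))%E.
Proof.
rewrite /EMD; apply: le_ereal_inf_tmp => _ [g gc <-].
have gc' := gc; move: gc' => [g0 _].
apply: le_trans; first apply: ereal_inf_lbound.
  exists (gam sigma g) => //.
  split; first by move=> z; exact: gam_ge0.
  split.
    by move=> a; apply: (@marg1 R Delta sigma p q g a); rewrite inE.
  by move=> b; apply: (@marg2 R Delta sigma p q g b); rewrite inE.
exact: costle.
Qed.
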